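(* Let $\mathcal{K}$ be an arc in $\mathbb{P}^2(\mathbb{F}_q)$ and let $\mathcal{C}_1$ be an irreducible envelope of $\mathcal{K}$. Then (1) $\mathcal{C}_1$ is defined over $\mathbb{F}_q$; (2) if $q$ is odd and $\mathcal{K}$ is complete and not a conic, then the degree of $\mathcal{C}_1$ is at least three.
   Context: A $k$-arc is a set of $k$ points of $\mathbb{P}^2(\mathbb{F}_q)$ no three collinear; it is complete if not properly contained in another arc. Lines of $\mathbb{P}^2(\overline{\mathbb{F}}_q)$ are regarded as points of the dual plane. Segre associates to $\mathcal{K}$ its envelope $\mathcal{C}$, a plane algebraic curve of the dual plane defined over $\mathbb{F}_q$ (whose points include the unisecants, i.e. lines of $\mathbb{P}^2(\mathbb{F}_q)$ meeting $\mathcal{K}$ in exactly one point). For $q$ odd it has the property: $\mathcal{K}$ is incomplete iff $\mathcal{C}$ has a linear component defined over $\mathbb{F}_q$, and $\mathcal{K}$ is a conic iff it is complete and $\mathcal{C}$ has a quadratic component defined over $\mathbb{F}_q$. A non-singular point $P$ of a plane curve $\mathcal{A}$ is an inflexion point if $I(P,\mathcal{A}\cap\ell)>2$ for the tangent $\ell$ at $P$. A point $P_0\in\mathcal{C}$ is special if it is non-singular on $\mathcal{C}$, $\mathbb{F}_q$-rational and not an inflexion point of $\mathcal{C}$; the unique irreducible component of $\mathcal{C}$ containing a special point $P_0$ is the irreducible envelope associated to $P_0$, and an irreducible envelope of $\mathcal{K}$ is one associated to some special point. *)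

(* Defs.v *)
From HB Require Import structures.
From mathcomp Require Import all_boot all_order all_algebra all_field.
From mathcomp Require Import mpoly.
Set Implicit Arguments. Unset Strict Implicit. Unset Printing Implicit Defensive.
Import Order.TTheory GRing.Theory Num.Theory.
Local Open Scope ring_scope.

(* F is F_q (q = #|F|), L is an algebraic closure of F given by the embedding
   iota : F -> L (L algebraically closed and algebraic over iota(F)). *)
Definition is_alg_closure (F : finFieldType) (L : closedFieldType)
  (iota : {rmorphism F -> L}) : Prop :=
  forall x : L, exists p : {poly F}, p != 0 /\ root (map_poly iota p) x.

(* A point (or a line, via its coordinates) of P^2(F_q) is a nonzero
   vector of F^3, taken up to a nonzero scalar. *)
Definition dotF (F : fieldType) (u x : 'rV[F]_3) : F := \sum_(i < 3) u 0 i * x 0 i.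

Definition proportional (F : fieldType) (x y : 'rV[F]_3) : Prop :=
  exists c : F, c != 0 /\ y = c *: x.

Definition collinear3 (F : fieldType) (x y z : 'rV[F]_3) : Prop :=
  \det (col_mx x (col_mx y z) : 'M[F]_(1 + (1 + 1))) = 0.

(* A set of representatives K describes a set of points of P^2(F_q):
   all nonzero and pairwise non-proportional. *)
Definition proj_set (F : finFieldType) (K : {set 'rV[F]_3}) : Prop :=
  (forall x, x \in K -> x != 0) /\
  (forall x y, x \in K -> y \in K -> proportional x y -> x = y).

Definition is_arc (F : finFieldType) (K : {set 'rV[F]_3}) : Prop :=
  proj_set K /\
  (forall x y z, x \in K -> y \in K -> z \in K ->
     x != y -> y != z -> x != z -> ~ collinear3 x y z).

Definition proj_sub (F : finFieldType) (K K' : {set 'rV[F]_3}) : Prop :=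
  forall x, x \in K -> exists2 y, y \in K' & proportional x y.

Definition is_complete_arc (F : finFieldType) (K : {set 'rV[F]_3}) : Prop :=
  is_arc K /\
  ~ (exists K' : {set 'rV[F]_3}, is_arc K' /\ proj_sub K K' /\ ~ proj_sub K' K).

(* K is (the point set of) a non-degenerate conic: the F_q-rational points of
   Q(x) = x A x^T = 0 with Q non-singular over the algebraic closure
   (no point of the conic where the gradient x (A + A^T) vanishes). *)
Definition is_conic (F : finFieldType) (L : closedFieldType)
  (iota : {rmorphism F -> L}) (K : {set 'rV[F]_3}) : Prop :=
  exists A : 'M[F]_3,
    (forall x : 'rV[L]_3, x != 0 -> (x *m map_mx iota A *m x^T) 0 0 = 0 ->
        x *m (map_mx iota (A + A^T)) != 0) /\
    proj_sub K [set x : 'rV[F]_3 | (x != 0) && ((x *m A *m x^T) 0 0 == 0)] /\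
    proj_sub [set x : 'rV[F]_3 | (x != 0) && ((x *m A *m x^T) 0 0 == 0)] K.

Definition unisecant (F : finFieldType) (K : {set 'rV[F]_3}) (u : 'rV[F]_3) : Prop :=
  u != 0 /\ #|[set x in K | dotF u x == 0]| = 1%N.

(* A curve is given by a nonzero homogeneous polynomial of positive degree
   (equations are considered up to a nonzero scalar). *)
Definition curve_deg (L : fieldType) (C : {mpoly L[3]}) : nat := (msize C).-1.

Definition is_curve (L : fieldType) (C : {mpoly L[3]}) : Prop :=
  C != 0 /\ (0 < curve_deg C)%N /\ C \is (curve_deg C).-homog.

Definition embv (F : finFieldType) (L : closedFieldType)
  (iota : {rmorphism F -> L}) (u : 'rV[F]_3) : 'I_3 -> L :=
  fun i => iota (u 0 i).

Definition defined_over_Fq (F : finFieldType) (L : closedFieldType)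
  (iota : {rmorphism F -> L}) (C : {mpoly L[3]}) : Prop :=
  exists (D : {mpoly F[3]}) (c : L), c != 0 /\ C = c *: map_mpoly iota D.

Definition mpoly_const (L : fieldType) (p : {mpoly L[3]}) : Prop :=
  (msize p <= 1)%N.

Definition mpoly_irreducible (L : fieldType) (p : {mpoly L[3]}) : Prop :=
  ~ mpoly_const p /\
  forall f g : {mpoly L[3]}, p = f * g -> mpoly_const f \/ mpoly_const g.

Definition mdivides (L : fieldType) (p C : {mpoly L[3]}) : Prop :=
  exists r : {mpoly L[3]}, C = p * r.

Definition is_component (L : fieldType) (C1 C : {mpoly L[3]}) : Prop :=
  is_curve C1 /\ mpoly_irreducible C1 /\ mdivides C1 C.

Definition has_Fq_component (F : finFieldType) (L : closedFieldType)
  (iota : {rmorphism F -> L}) (d : nat) (C : {mpoly L[3]}) : Prop :=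
  exists D : {mpoly F[3]},
    is_component (map_mpoly iota D) C /\ curve_deg (map_mpoly iota D) = d.

Definition on_curve (L : fieldType) (C : {mpoly L[3]}) (v : 'I_3 -> L) : Prop :=
  (exists i, v i != 0) /\ C.@[v] = 0.

Definition nonsingular_pt (L : fieldType) (C : {mpoly L[3]}) (v : 'I_3 -> L) : Prop :=
  on_curve C v /\ exists i : 'I_3, (mderiv i C).@[v] != 0.

Definition restr_line (L : fieldType) (C : {mpoly L[3]}) (v w : 'I_3 -> L) : {poly L} :=
  mmap (fun a => a%:P) (fun i => (v i)%:P + 'X * (w i)%:P) C.

(* inflexion point: non-singular point v such that the tangent line l at v
   satisfies I(v, C \cap l) > 2, i.e. C restricted to l (parametrized from v)
   vanishes to order >= 3 at v (or identically). *)
Definition inflexion_pt (L : fieldType) (C : {mpoly L[3]}) (v : 'I_3 -> L) : Prop :=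
  nonsingular_pt C v /\
  exists w : 'I_3 -> L,
    (~ exists c : L, forall i, w i = c * v i) /\
    \sum_(i < 3) (mderiv i C).@[v] * w i = 0 /\
    ('X^3 %| restr_line C v w)%R.

Definition special_pt (F : finFieldType) (L : closedFieldType)
  (iota : {rmorphism F -> L}) (C : {mpoly L[3]}) (u : 'rV[F]_3) : Prop :=
  u != 0 /\ nonsingular_pt C (embv iota u) /\ ~ inflexion_pt C (embv iota u).

Definition irreducible_envelope (F : finFieldType) (L : closedFieldType)
  (iota : {rmorphism F -> L}) (C C1 : {mpoly L[3]}) : Prop :=
  exists u : 'rV[F]_3, special_pt iota C u /\
    is_component C1 C /\ C1.@[embv iota u] = 0.

(* The properties of Segre's envelope C of the arc K used in the paper. *)
Definition segre_envelope (F : finFieldType) (L : closedFieldType)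
  (iota : {rmorphism F -> L}) (K : {set 'rV[F]_3}) (C : {mpoly L[3]}) : Prop :=
  is_curve C /\ defined_over_Fq iota C /\
  (forall u, unisecant K u -> C.@[embv iota u] = 0) /\
  (odd #|F| ->
     ((~ is_complete_arc K) <-> has_Fq_component iota 1 C) /\
     (is_conic iota K <-> (is_complete_arc K /\ has_Fq_component iota 2 C))).

(* Main.v *)
Require Import Defs.
From HB Require Import structures.
From mathcomp Require Import all_boot all_order all_algebra all_field.
From mathcomp Require Import mpoly all_fingroup all_solvable.
From mathcomp Require Import zify ring.
From Stdlib Require Import Classical.
Set Implicit Arguments. Unset Strict Implicit. Unset Printing Implicit Defensive.
Import Order.TTheory GRing.Theory Num.Theory.
Local Open Scope ring_scope.
Section Generic.
Variable R : comUnitRingType.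
Definition gdvd (a b : R) := exists c, b = a * c.
Definition gprime (p : R) := p != 0 /\ p \notin GRing.unit /\
  forall a b, gdvd p (a * b) -> gdvd p a \/ gdvd p b.
Definition girred (p : R) := p != 0 /\ p \notin GRing.unit /\
  forall a b, p = a * b -> a \is a GRing.unit \/ b \is a GRing.unit.
Definition gfactorial := forall c : R, c != 0 -> exists u s,
  u \is a GRing.unit /\ (forall x, x \in s -> gprime x) /\ c = u * \prod_(x <- s) x.
Definition geuclid := forall p : R, girred p -> gprime p.

Lemma gdvd0 a : gdvd a 0. Proof. by exists 0; rewrite mulr0. Qed.
Lemma gdvdD a x y : gdvd a x -> gdvd a y -> gdvd a (x + y).
Proof. by move=> [c ->] [d ->]; exists (c + d); rewrite mulrDr. Qed.
Lemma gdvdN a x : gdvd a x -> gdvd a (- x).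
Proof. by move=> [c ->]; exists (- c); rewrite mulrN. Qed.
Lemma gdvdMr a x y : gdvd a x -> gdvd a (x * y).
Proof. by move=> [c ->]; exists (c * y); rewrite mulrA. Qed.
Lemma gdvdMl a x y : gdvd a y -> gdvd a (x * y).
Proof. by rewrite mulrC; apply: gdvdMr. Qed.
Lemma gdvd_sum a (I : Type) (r : seq I) (P : pred I) (F : I -> R) :
  (forall i, P i -> gdvd a (F i)) -> gdvd a (\sum_(i <- r | P i) F i).
Proof.
move=> H; elim/big_rec: _ => [|i x Pi Hx]; first exact: gdvd0.
by apply: gdvdD => //; apply: H.
Qed.
End Generic.

Lemma ex_min_nat (Q : nat -> Prop) : (exists n, Q n) ->
  exists n, Q n /\ forall m, Q m -> (n <= m)%N.
Proof.
move=> [n Qn]; elim: n {-2}n (leqnn n) Qn => [|N IH] n len Qn.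
  by exists n; split=> // m _; move: len; rewrite leqn0 => /eqP ->.
case: (classic (exists m, Q m /\ (m < n)%N)) => [[m [Qm ltm]]|H].
  by apply: (IH m) => //; rewrite -ltnS (leq_trans ltm).
exists n; split=> // m Qm; rewrite leqNgt; apply/negP => lt.
by apply: H; exists m.
Qed.

Section PolyEuclid.
Variable R : idomainType.
Implicit Types p a b c : R.
Implicit Types A B G H P Q : {poly R}.

Lemma gdvdC_coef p A : gdvd p%:P A <-> forall i, gdvd p A`_i.
Proof.
split=> [[Q ->] i|H]; first by exists Q`_i; rewrite coefCM.
have H' i : exists x, A`_i == p * x by have [x ->] := H i; exists x.
exists (\poly_(i < size A) xchoose (H' i)); apply/polyP=> i.
rewrite coefCM coef_poly; case: ltnP => [_|le]; first exact/eqP/(xchooseP (H' i)).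
by rewrite mulr0 nth_default.
Qed.

Lemma polyC_unitE p : (p%:P \is a GRing.unit) = (p \is a GRing.unit).
Proof.
rewrite poly_unitE coefC /= size_polyC.
by case: (eqVneq p 0) => [->|_]; rewrite ?unitr0 ?andbF.
Qed.

Lemma polyC_prime p : gprime p -> gprime p%:P.
Proof.
move=> [p0 [pU pP]]; split; first by rewrite polyC_eq0.
split; first by rewrite polyC_unitE.
move=> A B AB; apply: NNPP => /not_or_and [nA nB].
move: nA nB; rewrite !gdvdC_coef => nA nB.
have [i [ni mi]] := ex_min_nat (not_all_ex_not _ _ nA).
have [j [nj mj]] := ex_min_nat (not_all_ex_not _ _ nB).
have lA k : (k < i)%N -> gdvd p A`_k.
  by move=> lt; apply: NNPP => nk; have := mi _ nk; rewrite leqNgt lt.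
have lB k : (k < j)%N -> gdvd p B`_k.
  by move=> lt; apply: NNPP => nk; have := mj _ nk; rewrite leqNgt lt.
move/gdvdC_coef: AB => /(_ (i + j)%N); rewrite coefM.
have ii : (i < (i + j).+1)%N by rewrite ltnS leq_addr.
rewrite (bigD1 (Ordinal ii)) //= addKn => Hs.
have : gdvd p (A`_i * B`_j).
  have -> : A`_i * B`_j = (A`_i * B`_j + \sum_(k < (i + j).+1 | k != Ordinal ii)
     A`_k * B`_(i + j - k)) - \sum_(k < (i + j).+1 | k != Ordinal ii)
     A`_k * B`_(i + j - k) by rewrite addrK.
  apply: gdvdD => //; apply: gdvdN; apply: gdvd_sum => k nk.
  have : (k : nat) != i by apply: contra nk => /eqP e; apply/eqP/val_inj.
  rewrite neq_ltn => /orP [lt|gt]; first by apply: gdvdMr; apply: lA.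
  apply: gdvdMl; apply: lB.
  have := ltn_ord k; rewrite ltnS => le.
  lia.
by case/pP.
Qed.
End PolyEuclid.

Section IdomainFacts.
Variable R : idomainType.
Lemma gprime_assoc (v x : R) : gprime x -> v \is a GRing.unit -> gprime (v * x).
Proof.
move=> [x0 [xU xP]] vU; have v0 : v != 0 by apply: contraTneq vU => ->; rewrite unitr0.
split; first by rewrite mulf_neq0.
split; first by rewrite unitrM vU.
move=> a b [c e]; case: (xP a b).
- by exists (v * c); rewrite e mulrCA mulrA.
- by move=> [d ->]; left; exists (v^-1 * d); rewrite [v * x]mulrC -mulrA mulVKr.
- by move=> [d ->]; right; exists (v^-1 * d); rewrite [v * x]mulrC -mulrA mulVKr.
Qed.

Lemma factorial_irred_prime : gfactorial R -> geuclid R.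
Proof.
move=> fR g [g0 [gU gI]]; have [u [s [uU [sP e]]]] := fR g g0.
case: s sP e => [|x s] sP e; first by move: gU; rewrite e big_nil mulr1 uU.
rewrite big_cons mulrA in e.
have xP : gprime x by apply: sP; rewrite inE eqxx.
case: (gI _ _ e) => [U|U].
  by move: (xP) => [_ [xU _]]; move: U; rewrite unitrM (negbTE xU) andbF.
rewrite e mulrC mulrA; apply: gprime_assoc; first exact: xP.
by rewrite unitrM uU andbT.
Qed.
End IdomainFacts.

Section PolyEuclid2.
Variable R : idomainType.

Lemma poly_euclid : gfactorial R -> geuclid {poly R}.
Proof.
move=> fR G [G0 [GU Girr]].
case: (leqP (size G) 1) => [s1|s2].
  have eG := size1_polyC s1; rewrite eG; apply: polyC_prime.
  apply: (factorial_irred_prime fR); split; first by rewrite -polyC_eq0 -eG.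
  split; first by rewrite -polyC_unitE -eG.
  move=> a b e; case: (Girr a%:P b%:P); rewrite ?polyC_unitE; [|tauto|tauto].
  by rewrite eG e polyCM.
split=> //; split=> // A B GAB.
pose I P := gdvd G (P * B).
have ID P Q : I P -> I Q -> I (P - Q).
  by move=> IP IQ; rewrite /I mulrBl; apply: gdvdD => //; apply: gdvdN.
have IM P Q : I P -> I (Q * P).
  by move=> IP; rewrite /I -mulrA; apply: gdvdMl.
have IG : I G by exists B.
have [n [[H [IH [H0 sH]]] mn]] :=
  ex_min_nat (Q := fun n => exists H, I H /\ H != 0 /\ size H = n)
    (ex_intro _ _ (ex_intro _ G (conj IG (conj G0 erefl)))).
have minH K : I K -> K != 0 -> (size H <= size K)%N.
  by move=> IK K0; rewrite sH; apply: mn; exists K.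
have pdiv P : I P -> exists c Q, c != 0 /\ c%:P * P = Q * H.
  move=> IP; have := Pdiv.Idomain.divp_eq P H.
  set c := _ ^+ _; set Q := _ %/ _; set Rm := _ %% _ => e.
  have IR : I Rm.
    have -> : Rm = c%:P * P - Q * H by rewrite mul_polyC e addrC addKr.
    by apply: ID; apply: IM.
  have R0 : Rm = 0.
    apply/eqP; apply: contraT => Rm0; have := minH _ IR Rm0.
    by rewrite leqNgt Pdiv.Idomain.ltn_modp H0.
  exists c, Q; split; first by rewrite expf_neq0 // lead_coef_eq0.
  by rewrite mul_polyC e R0 addr0.
have pndvd p : gprime p -> ~ gdvd p%:P G.
  move=> [p0 [pU _]] [T eT]; case: (Girr _ _ eT); first by rewrite polyC_unitE (negbTE pU).
  rewrite poly_unitE => /andP [/eqP sT _]; move: s2.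
  by rewrite eT size_Cmul // sT.
have IpC p P : gprime p -> I (p%:P * P) -> I P.
  move=> pp [T eT]; have pC := polyC_prime pp.
  case: pC => [pC0 [_ pCP]].
  case: (pCP G T); first by exists (P * B); rewrite -eT mulrA.
    by move=> /(pndvd _ pp).
  move=> [T1 eT1]; exists T1; apply: (mulfI pC0).
  by rewrite mulrA eT eT1 mulrCA.
have peel (s : seq R) : (forall x, x \in s -> gprime x) ->
  forall Q H0, I H0 -> (\prod_(x <- s) x)%:P * G = Q * H0 ->
  exists Q' H', I H' /\ gdvd H' H0 /\ G = Q' * H'.
  elim: s => [|x s IHs] sP Q H1 IH1 e.
    by exists Q, H1; split=> //; split; [exists 1; rewrite mulr1|rewrite -e big_nil mul1r].
  have xp : gprime x by apply: sP; rewrite inE eqxx.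
  have sP' y : y \in s -> gprime y by move=> ys; apply: sP; rewrite inE ys orbT.
  have [xC0 [_ xCP]] := polyC_prime xp.
  rewrite big_cons polyCM -mulrA in e.
  case: (xCP Q H1); first by exists ((\prod_(y <- s) y)%:P * G).
    move=> [Q1 eQ1]; apply: (IHs sP' Q1 H1 IH1); apply: (mulfI xC0).
    by rewrite e eQ1 mulrA.
  move=> [H2 eH2]; have IH2 : I H2 by apply: (IpC x) => //; rewrite -eH2.
  have [Q' [H' [IH' [dH' eG]]]] : exists Q' H', I H' /\ gdvd H' H2 /\ G = Q' * H'.
    apply: (IHs sP' Q H2 IH2); apply: (mulfI xC0).
    by rewrite e eH2 mulrCA.
  exists Q', H'; split=> //; split=> //.
  by case: dH' => [W eW]; exists (W * x%:P); rewrite eH2 eW mulrC mulrA.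
have peel2 (s : seq R) : (forall x, x \in s -> gprime x) ->
  forall T, (\prod_(x <- s) x)%:P * A = G * T -> gdvd G A.
  elim: s => [|x s IHs] sP T e; first by exists T; rewrite -e big_nil mul1r.
  have xp : gprime x by apply: sP; rewrite inE eqxx.
  have sP' y : y \in s -> gprime y by move=> ys; apply: sP; rewrite inE ys orbT.
  have [xC0 [_ xCP]] := polyC_prime xp.
  rewrite big_cons polyCM -mulrA in e.
  case: (xCP G T); first by exists ((\prod_(y <- s) y)%:P * A).
    by move=> /(pndvd _ xp).
  move=> [T1 eT1]; apply: (IHs sP' T1); apply: (mulfI xC0).
  by rewrite e eT1 mulrCA.
have [c [Q [c0 ecG]]] := pdiv G IG.
have [u [s [uU [sP ec]]]] := fR c c0.
have [Q' [H' [IH' [dH' eG]]]] : exists Q' H', I H' /\ gdvd H' H /\ G = Q' * H'.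
  apply: (peel s sP ((u^-1)%:P * Q) H IH).
  by rewrite -mulrA -ecG mulrA -polyCM ec mulrA mulVr // mul1r.
case: (Girr _ _ eG) => [Q'U|H'U].
  left; have [c2 [Q2 [c20 ecA]]] := pdiv A GAB.
  have [u2 [t2 [u2U [t2P ec2]]]] := fR c2 c20.
  case: dH' => W eW.
  apply: (peel2 t2 t2P ((u2^-1)%:P * (Q2 * W * Q'^-1))).
  have eH' : H' = Q'^-1 * G by rewrite eG mulKr.
  have -> : (\prod_(x <- t2) x)%:P = (u2^-1)%:P * c2%:P.
    by rewrite -polyCM ec2 mulrA mulVr // mul1r.
  by rewrite -[_ * c2%:P * A]mulrA ecA eW eH'; ring.
right; case: IH' => T eT; exists (T * H'^-1).
by rewrite mulrA -eT mulrC mulKr.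
Qed.
End PolyEuclid2.

Local Notation widen := (widen_ord (leqnSn _)).
Section MpolyPart.
Variable L : fieldType.

Lemma munitE n (p : {mpoly L[n]}) :
  (p \is a GRing.unit) = (p == (p@_0)%:MP) && (p@_0 \in GRing.unit).
Proof. by []. Qed.

Lemma munit_msize n (p : {mpoly L[n]}) : (p \is a GRing.unit) = (msize p == 1%N).
Proof.
rewrite munitE; apply/idP/idP.
  move=> /andP [/eqP e u]; apply/msize_poly1P; exists p@_0 => //.
  by rewrite -unitfE.
move/msize_poly1P => [c c0 ->]; rewrite mcoeffC eqxx mulr1 eqxx /=.
by rewrite unitfE.
Qed.

Lemma mpoly_factorial n : geuclid {mpoly L[n]} -> gfactorial {mpoly L[n]}.
Proof.
move=> eu c; move: {2}(msize c) (leqnn (msize c)) => k.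
elim: k c => [|k IH] c le c0.
  by move: c0; rewrite -msize_poly_eq0; move: le; rewrite leqn0 => ->.
case: (boolP (c \is a GRing.unit)) => cU.
  by exists c, [::]; split=> //; split=> //; rewrite big_nil mulr1.
case: (classic (girred c)) => [ci|nci].
  exists 1, [:: c]; split; first exact: unitr1.
  split; last by rewrite big_seq1 mul1r.
  by move=> x; rewrite inE => /eqP ->; apply: eu.
have : ~ forall a b, c = a * b -> a \is a GRing.unit \/ b \is a GRing.unit.
  by move=> H; apply: nci.
move=> H; have [a Ha] := not_all_ex_not _ _ H.
have [b Hb] := not_all_ex_not _ _ Ha.
have [e Hab] := imply_to_and _ _ Hb.
have [aU bU] := not_or_and _ _ Hab.
move/negP: aU => aU; move/negP: bU => bU.
have a0 : a != 0 by apply: contra_neq c0; rewrite e => ->; rewrite mul0r.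
have b0 : b != 0 by apply: contra_neq c0; rewrite e => ->; rewrite mulr0.
have sa : (2 <= msize a)%N.
  move: aU; rewrite munit_msize; move: a0; rewrite -msize_poly_eq0; by case: (mmeasure _ _) => [|[|]].
have sb : (2 <= msize b)%N.
  move: bU; rewrite munit_msize; move: b0; rewrite -msize_poly_eq0; by case: (mmeasure _ _) => [|[|]].
have sc := msizeM a0 b0; rewrite -e in sc.
have [ua [sa' [uaU [saP ea]]]] := IH a ltac:(lia) a0.
have [ub [sb' [ubU [sbP eb]]]] := IH b ltac:(lia) b0.
exists (ua * ub), (sa' ++ sb'); split; first by rewrite unitrM uaU ubU.
split.
  by move=> x; rewrite mem_cat => /orP [/saP|/sbP].
by rewrite big_cat /= e ea eb; ring.
Qed.

Definition minv n (q : {poly {mpoly L[n]}}) : {mpoly L[n.+1]} :=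
  (map_poly (@mwiden n L) q).['X_ord_max].

Lemma muniXw n (j : 'I_n) : muni ('X_(widen j) : {mpoly L[n.+1]}) = ('X_j)%:P.
Proof.
rewrite /muni mmapX mmap1U; case: splitP => [k /= e|k /= e].
  by have -> : k = j by apply/val_inj; rewrite /= -e.
by move: (ltn_ord j); rewrite e; lia.
Qed.

Lemma muniXm n : muni ('X_ord_max : {mpoly L[n.+1]}) = 'X.
Proof.
rewrite /muni mmapX mmap1U; case: splitP => [k /= e|k /= e] //.
by move: (ltn_ord k); rewrite -e; lia.
Qed.

Lemma mwidenXU n (j : 'I_n) : mwiden ('X_j : {mpoly L[n]}) = 'X_(widen j).
Proof. by rewrite mwidenX mnmwiden1. Qed.

Lemma mpoly_rmorph_ext n (S : nzRingType) (f g : {rmorphism {mpoly L[n]} -> S}) :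
  (forall c, f c%:MP = g c%:MP) -> (forall i, f 'X_i = g 'X_i) -> f =1 g.
Proof.
move=> hC hX p; rewrite (mpolyE p) !rmorph_sum; apply: eq_bigr => m _.
rewrite -mul_mpolyC !rmorphM hC; congr (_ * _).
rewrite mpolyXE_id !rmorph_prod; apply: eq_bigr => i _.
by rewrite !rmorphXn hX.
Qed.

Lemma poly_rmorph_ext (A : nzRingType) (S : nzRingType) (f g : {rmorphism {poly A} -> S}) :
  (forall c, f c%:P = g c%:P) -> f 'X = g 'X -> f =1 g.
Proof.
move=> hC hX p; rewrite -(coefK p) poly_def !rmorph_sum; apply: eq_bigr => i _.
by rewrite -mul_polyC !rmorphM hC !rmorphXn hX.
Qed.

Lemma minv_muni n (p : {mpoly L[n.+1]}) : minv (muni p) = p.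
Proof.
have := @mpoly_rmorph_ext n.+1 _
  ((horner_eval ('X_ord_max : {mpoly L[n.+1]})) \o (map_poly (@mwiden n L)) \o (@muni n L))
  idfun; apply => [c|i] /=.
  by rewrite muniC map_polyC /horner_eval hornerC; apply: mwidenC.
case: (unliftP ord_max i) => [j ->|->].
  have -> : lift ord_max j = widen j by apply/val_inj; rewrite /= /bump leqNgt ltn_ord.
  by rewrite muniXw map_polyC /horner_eval hornerC; apply: mwidenXU.
by rewrite muniXm map_polyX /horner_eval hornerX.
Qed.

Lemma muni_minv n (q : {poly {mpoly L[n]}}) : muni (minv q) = q.
Proof.
have hc (c : {mpoly L[n]}) : muni (mwiden c) = c%:P.
  have := @mpoly_rmorph_ext n _ ((@muni n L) \o (@mwiden n L)) polyC.
  by apply => [d|i] /=; [rewrite mwidenC muniC | rewrite mwidenXU muniXw].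
have := @poly_rmorph_ext _ _ ((@muni n L) \o
  (horner_eval ('X_ord_max : {mpoly L[n.+1]})) \o (map_poly (@mwiden n L))) idfun.
apply => [c|] /=.
  by rewrite map_polyC /horner_eval hornerC hc.
by rewrite map_polyX /horner_eval hornerX muniXm.
Qed.
End MpolyPart.

Section Transfer.
Variable L : fieldType.

Lemma minvM n (a b : {poly {mpoly L[n]}}) : minv (a * b) = minv a * minv b.
Proof.
exact: (rmorphM ((horner_eval ('X_ord_max : {mpoly L[n.+1]})) \o (map_poly (@mwiden n L)))).
Qed.

Lemma minv_unit n (a : {poly {mpoly L[n]}}) : a \is a GRing.unit -> minv a \is a GRing.unit.
Proof.
exact: (rmorph_unit ((horner_eval ('X_ord_max : {mpoly L[n.+1]})) \o (map_poly (@mwiden n L)))).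
Qed.

Lemma muni_unit n (a : {poly {mpoly L[n]}}) :
  minv a \is a GRing.unit -> a \is a GRing.unit.
Proof.
case/unitrPr => y e; apply/unitrPr; exists (muni y).
by rewrite -{1}(muni_minv a) -muniM e muni1.
Qed.

Lemma muni_dvd n (a b : {mpoly L[n.+1]}) : gdvd a b -> gdvd (muni a) (muni b).
Proof. by move=> [c ->]; exists (muni c); rewrite muniM. Qed.

Lemma euclid_transfer n : geuclid {poly {mpoly L[n]}} -> geuclid {mpoly L[n.+1]}.
Proof.
move=> eu G [G0 [GU GI]].
have [mG0 [mGU mGP]] : gprime (muni G).
  apply: eu; split.
    by apply: contra_neq G0 => e; rewrite -(minv_muni G) e /minv map_poly0 horner0.
  split.
    by apply/negP => /minv_unit; rewrite minv_muni; apply/negP.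
  move=> a b e; case: (GI (minv a) (minv b)).
  - by rewrite -minvM -e minv_muni.
  - by move=> U; left; apply: muni_unit.
  - by move=> U; right; apply: muni_unit.
split=> //; split=> // A B [T eT].
have := mGP (muni A) (muni B); rewrite -muniM; case.
- exact: muni_dvd (ex_intro _ T eT).
- by move=> [T' eT']; left; exists (minv T'); rewrite -(minv_muni A) eT' minvM minv_muni.
- by move=> [T' eT']; right; exists (minv T'); rewrite -(minv_muni B) eT' minvM minv_muni.
Qed.

Lemma mpoly_euclid n : geuclid {mpoly L[n]}.
Proof.
elim: n => [|n IH].
  move=> G [G0 [GU _]]; case/negP: GU; rewrite munit_msize; apply/msize_poly1P.
  exists G@_0; last exact: nvar0_mpolyC_eq.
  by apply: contra_neq G0 => e; rewrite (nvar0_mpolyC_eq G) // e.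
by apply: euclid_transfer; apply: poly_euclid; apply: mpoly_factorial.
Qed.
End Transfer.

Section Frob.
Variables (F : finFieldType) (L : fieldType) (iota : {rmorphism F -> L}).

Definition frobq_def (f : {rmorphism F -> L}) (x : L) : L := x ^+ #|F|.
Local Notation frobq := (frobq_def iota).

Lemma frobq_pnat : [pchar L].-nat #|F|.
Proof.
have [p pp pF] := finPcharP F.
have pL : p \in [pchar L] := rmorph_pchar iota pF.
have := pprimeChar_pgroup pF; rewrite /pgroup cardsT /= => pn.
apply: sub_in_pnat pn => q _; rewrite inE => /eqP ->; exact: pL.
Qed.

Fact frobq_nmod : nmod_morphism frobq.
Proof.
split; first by rewrite /frobq_def expr0n; case: #|F| (finNzRing_gt1 F).
by move=> x y; rewrite /frobq_def exprDn_pchar // frobq_pnat.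
Qed.

Fact frobq_monoid : monoid_morphism frobq.
Proof. by split; [rewrite /frobq_def expr1n | move=> x y; rewrite /frobq_def exprMn]. Qed.

HB.instance Definition _ := GRing.isNmodMorphism.Build L L frobq frobq_nmod.
HB.instance Definition _ := GRing.isMonoidMorphism.Build L L frobq frobq_monoid.

Lemma frobq_iota a : frobq (iota a) = iota a.
Proof. by rewrite /frobq_def -rmorphXn expf_card. Qed.

Lemma frobq_fixed x : frobq x = x -> exists a, x = iota a.
Proof.
move=> fx; apply: NNPP => nx.
have nx' : x \notin [seq iota a | a <- enum F].
  by apply/mapP => [[a _ e]]; apply: nx; exists a.
pose P : {poly L} := 'X^#|F| - 'X.
have q1 := finNzRing_gt1 F.
have sP : size P = #|F|.+1 by rewrite /P size_polyDl ?size_polyXn ?size_polyN ?size_polyX.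
have P0 : P != 0 by rewrite -size_poly_eq0 sP.
have Hr : all (root P) (x :: [seq iota a | a <- enum F]).
  apply/allP => y; rewrite inE => /orP [/eqP ->|/mapP [a _ ->]];
    rewrite /root /P !hornerE subr_eq0; apply/eqP; first exact: fx.
  exact: frobq_iota.
have Hu : uniq (x :: [seq iota a | a <- enum F]).
  rewrite /= nx' map_inj_uniq ?enum_uniq //; exact: fmorph_inj.
have := max_poly_roots P0 Hr Hu.
by rewrite sP /= size_map -cardE ltnn.
Qed.
End Frob.

Section Msig.
Variables (F : finFieldType) (L : fieldType) (iota : {rmorphism F -> L}).
Local Notation sig := (frobq_def iota : {rmorphism L -> L}).

Lemma msig_iota (D : {mpoly F[3]}) :
  map_mpoly sig (map_mpoly iota D) = map_mpoly iota D.
Proof. by apply/mpolyP => m; rewrite !mcoeff_map_mpoly; apply: frobq_iota. Qed.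

Lemma msize_msig (P : {mpoly L[3]}) : msize (map_mpoly sig P) = msize P.
Proof.
by rewrite !msizeE (perm_big _ (msupp_map_mpoly _ (fmorph_inj _))).
Qed.

Lemma meval_msig (P : {mpoly L[3]}) (v : 'I_3 -> L) :
  (forall i, sig (v i) = v i) -> (map_mpoly sig P).@[v] = sig (P.@[v]).
Proof.
move=> hv; rewrite !mevalE (perm_big _ (msupp_map_mpoly _ (fmorph_inj _))).
rewrite rmorph_sum; apply: eq_bigr => m _.
rewrite mcoeff_map_mpoly rmorphM rmorph_prod; congr (_ * _).
by apply: eq_bigr => i _; rewrite rmorphXn; congr (_ ^+ _); symmetry; exact: hv.
Qed.

Lemma descent (P : {mpoly L[3]}) (t : L) :
  P != 0 -> map_mpoly sig P = t *: P ->
  exists (D : {mpoly F[3]}) (c : L), c != 0 /\ P = c *: map_mpoly iota D.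
Proof.
move=> P0 eP.
have [m mP] : exists m, m \in msupp P.
  case E: (msupp P) => [|m s]; last by exists m; rewrite inE eqxx.
  by move: P0; rewrite -msupp_eq0 E.
set a := P@_m; have a0 : a != 0 by rewrite /a -mcoeff_msupp.
have ea : sig a = t * a by rewrite -mcoeff_map_mpoly eP mcoeffZ.
have t0 : t != 0.
  by apply: contra_neq a0 => t0; apply/(fmorph_inj sig); rewrite ea t0 mul0r rmorph0.
have fix1 m' : sig (a^-1 * P@_m') = a^-1 * P@_m'.
  rewrite rmorphM fmorphV ea -mcoeff_map_mpoly eP mcoeffZ.
  by field; rewrite ?a0 ?t0 ?mulf_neq0.
pose pre b := odflt 0 [pick y | iota y == b].
have preK m' : iota (pre (a^-1 * P@_m')) = a^-1 * P@_m'.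
  rewrite /pre; case: pickP => [y /eqP //|H].
  have [y ey] := frobq_fixed (fix1 m').
  by move: (H y); rewrite ey eqxx.
exists (\sum_(m' <- msupp P) pre (a^-1 * P@_m') *: 'X_[m']), a; split=> //.
have -> : map_mpoly iota (\sum_(m' <- msupp P) pre (a^-1 * P@_m') *: 'X_[m'])
    = \sum_(m' <- msupp P) (a^-1 * P@_m') *: 'X_[m'].
  apply/mpolyP => k; rewrite mcoeff_map_mpoly !raddf_sum /=.
  apply: eq_bigr => m' _; rewrite !mcoeffZ mcoeffX rmorphM preK; congr (_ * _).
  by rewrite mcoeffX rmorph_nat.
under eq_bigr do rewrite -scalerA.
by rewrite -scaler_sumr -mpolyE scalerA divff // scale1r.
Qed.
End Msig.

Lemma mirred_gprime (L : fieldType) (p : {mpoly L[3]}) : mpoly_irreducible p -> gprime p.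
Proof.
move=> [nc H]; apply: mpoly_euclid.
have nz q : q != 0 -> mpoly_const q -> q \is a GRing.unit.
  rewrite munit_msize -msize_poly_eq0 /mpoly_const.
  by case: (msize q) => [|[|]].
split.
  by apply/eqP => p0; apply: nc; rewrite /mpoly_const p0 msize0.
split.
  by rewrite munit_msize; apply/negP => /eqP s1; apply: nc; rewrite /mpoly_const s1.
move=> a b e; case: (H a b e) => [ca|cb].
  left; apply: nz ca; apply/eqP => a0; apply: nc.
  by rewrite e a0 mul0r /mpoly_const msize0.
right; apply: nz cb; apply/eqP => b0; apply: nc.
by rewrite e b0 mulr0 /mpoly_const msize0.
Qed.

Unset Implicit Arguments. Set Strict Implicit. Set Printing Implicit Defensive.

Theorem lemma2p1 (F : finFieldType) (L : closedFieldType)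
  (iota : {rmorphism F -> L}) (Lalg : is_alg_closure iota)
  (K : {set 'rV[F]_3}) (C C1 : {mpoly L[3]}) :
  is_arc K ->
  segre_envelope iota K C ->
  irreducible_envelope iota C C1 ->
  defined_over_Fq iota C1 /\
  (odd #|F| -> is_complete_arc K -> ~ is_conic iota K -> (3 <= curve_deg C1)%N).
Proof.
move=> Karc [Ccurve [[D0 [c0 [c00 eC]]] [uni Hodd]]].
move=> [u [[u0 [[onC [i0 di0]] ninfl]] [[C1curve [C1irr [r eCr]]] C1u]]].
pose sig := (frobq_def iota : {rmorphism L -> L}).
set v := embv iota u in onC di0 ninfl C1u.
have vfix i : sig (v i) = v i by rewrite /v /embv; apply: frobq_iota.
have [C10 [_ C1P]] := mirred_gprime C1irr.
have part1 : defined_over_Fq iota C1.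
  pose k := sig c0 / c0.
  have eS : map_mpoly sig C = k *: C.
    rewrite eC map_mpolyZ msig_iota scalerA /k divfK //.
  have dv : gdvd C1 (map_mpoly sig C1 * map_mpoly sig r).
    have mM : map_mpoly sig (C1 * r) = map_mpoly sig C1 * map_mpoly sig r by exact: rmorphM.
    exists (k *: r); rewrite -mM -eCr eS eCr.
    by rewrite scalerAr.
  case: (C1P _ _ dv) => [[t et]|[t et]].
    have sC1 : msize (map_mpoly sig C1) = msize C1 by apply: msize_msig.
    have C1s : (0 < msize C1)%N by rewrite lt0n msize_poly_eq0.
    have t0 : t != 0.
      by apply: contraTneq C1s => t0; rewrite -sC1 et t0 mulr0 msize0.
    have := msizeM C10 t0; rewrite -et sC1 => st.
    have st1 : msize t = 1%N by move: st C1s; case: (mmeasure mdeg C1) => // n1; rewrite addSn /= => st _; lia.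
    have /msize_poly1P [t1 t10 et1] : msize t == 1%N by apply/eqP.
    apply: (descent (t := t1)) => //.
    by rewrite et et1 mulrC mul_mpolyC.
  exfalso.
  have rv : r.@[v] = 0.
    apply/eqP; rewrite -(fmorph_eq0 sig) -meval_msig // et mevalM C1u mul0r //.
  by move: di0; rewrite eCr mderivM mevalD !mevalM C1u rv mulr0 mul0r addr0 eqxx.
split=> // odd comp ncon.
have [D [c [c0' eC1]]] := part1.
set D' := map_mpoly iota D in eC1.
have sD : msize D' = msize C1 by rewrite eC1 msizeZ.
have hc : is_component D' C.
  case: C1curve => [C10' [dpos hom]].
  split.
    split; first by rewrite -msize_poly_eq0 sD msize_poly_eq0.
    rewrite /curve_deg sD; split=> //.
    have -> : D' = c^-1 *: C1 by rewrite eC1 scalerA mulVf // scale1r.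
    exact: dhomogZ.
  split.
    case: C1irr => [nc H]; split; first by rewrite /mpoly_const sD.
    move=> f g e; case: (H (c *: f) g); first by rewrite eC1 e scalerAl.
      by rewrite /mpoly_const msizeZ //; left.
    by right.
  by exists (c *: r); rewrite eCr eC1 -scalerAl scalerAr.
have dD : curve_deg D' = curve_deg C1 by rewrite /curve_deg sD.
case: C1curve => [_ [dpos _]].
move: dD; case E: (curve_deg C1) dpos => [|[|[|d]]] // _ dD.
  by case: (Hodd odd) => [[_ H] _]; exfalso; apply: (H _ comp); exists D; split.
by case: (Hodd odd) => [_ [_ H]]; exfalso; apply: ncon; apply: H; split=> //; exists D; split.
Qed.
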